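(* Let $S$ be a Hausdorff semitopological semigroup. If $M$ is a maximal ideal of $Lmc(S)$, then $E(M)$ is an $e$-ultrafilter; and if $\mathcal{A}$ is an $e$-ultrafilter, then $E^-(\mathcal{A})$ is a maximal ideal of $Lmc(S)$. Consequently $M\mapsto E(M)$ is a bijection from the set of maximal ideals of $Lmc(S)$ onto the set of $e$-ultrafilters.
   Context: A Hausdorff semitopological semigroup is a semigroup $S$ with a Hausdorff topology such that all maps $\lambda_s(x)=sx$, $r_s(x)=xs$ are continuous. $\mathcal{CB}(S)$: bounded continuous complex functions with sup norm; $\beta S$ its spectrum with Gelfand topology; $L_sf(x)=f(sx)$, $(T_\mu f)(s)=\mu(L_sf)$; $Lmc(S)=\{f\in\mathcal{CB}(S):T_\mu f\in\mathcal{CB}(S)\ \forall \mu\in\beta S\}$. $Z(Lmc(S))=\{f^{-1}(0):f\in Lmc(S)\}$. $E_\epsilon(f)=\{x\in S:|f(x)|\le\epsilon\}$; $E(I)=\{E_\epsilon(f):f\in I,\epsilon>0\}$; $E^-(\mathcal{A})=\{f\in Lmc(S):E_\epsilon(f)\in\mathcal{A}\ \forall\epsilon>0\}$. A $z$-filter is $\mathcal{A}\subseteq Z(Lmc(S))$ with $\emptyset\notin\mathcal{A}$, $S\in\mathcal{A}$, closed under finite intersections and upward closed within $Z(Lmc(S))$. An $e$-filter is a $z$-filter $\mathcal{A}$ with $E(E^-(\mathcal{A}))=\mathcal{A}$; an $e$-ultrafilter is an $e$-filter not properly contained in any other $e$-filter. *)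

(* Defs.v *)
From Stdlib Require Import Reals.
Open Scope R_scope.

Record C : Type := mkC { Re : R ; Im : R }.
Definition C0 : C := mkC 0 0.
Definition C1 : C := mkC 1 0.
Definition Cadd (z w : C) : C := mkC (Re z + Re w) (Im z + Im w).
Definition Copp (z : C) : C := mkC (- Re z) (- Im z).
Definition Cmul (z w : C) : C :=
  mkC (Re z * Re w - Im z * Im w) (Re z * Im w + Im z * Re w).
Definition Cabs (z : C) : R := sqrt (Re z * Re z + Im z * Im z).

Definition is_topology {S : Type} (open : (S -> Prop) -> Prop) : Prop :=
  open (fun _ => True) /\
  (forall U V, open U -> open V -> open (fun x => U x /\ V x)) /\
  (forall (F : (S -> Prop) -> Prop), (forall U, F U -> open U) ->
     open (fun x => exists U, F U /\ U x)).

Definition hausdorff {S : Type} (open : (S -> Prop) -> Prop) : Prop :=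
  forall x y : S, x <> y ->
    exists U V, open U /\ open V /\ U x /\ V y /\ (forall z, ~ (U z /\ V z)).

Definition continuous_map {S : Type} (open : (S -> Prop) -> Prop) (g : S -> S) : Prop :=
  forall U, open U -> open (fun x => U (g x)).

Definition semitop_semigroup {S : Type} (mul : S -> S -> S)
  (open : (S -> Prop) -> Prop) : Prop :=
  is_topology open /\ hausdorff open /\
  (forall x y z, mul x (mul y z) = mul (mul x y) z) /\
  (forall s, continuous_map open (fun x => mul s x)) /\
  (forall s, continuous_map open (fun x => mul x s)).

Definition continuous_C {S : Type} (open : (S -> Prop) -> Prop) (f : S -> C) : Prop :=
  forall x eps, 0 < eps ->
    exists U, open U /\ U x /\ forall y, U y -> Cabs (Cadd (f y) (Copp (f x))) < eps.

Definition CB {S : Type} (open : (S -> Prop) -> Prop) (f : S -> C) : Prop :=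
  continuous_C open f /\ exists K, forall x, Cabs (f x) <= K.

Definition fadd {S : Type} (f g : S -> C) : S -> C := fun x => Cadd (f x) (g x).
Definition fmul {S : Type} (f g : S -> C) : S -> C := fun x => Cmul (f x) (g x).
Definition fscal {S : Type} (c : C) (f : S -> C) : S -> C := fun x => Cmul c (f x).
Definition fzero {S : Type} : S -> C := fun _ => C0.

(** * Spectrum betaS of CB(S): nonzero multiplicative complex-linear functionals
    on CB(S) (values outside CB(S) are irrelevant). *)
Definition in_betaS {S : Type} (open : (S -> Prop) -> Prop) (mu : (S -> C) -> C) : Prop :=
  (forall f g, CB open f -> CB open g -> mu (fadd f g) = Cadd (mu f) (mu g)) /\
  (forall c f, CB open f -> mu (fscal c f) = Cmul c (mu f)) /\
  (forall f g, CB open f -> CB open g -> mu (fmul f g) = Cmul (mu f) (mu g)) /\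
  (exists f, CB open f /\ mu f <> C0).

Definition Lshift {S : Type} (mul : S -> S -> S) (s : S) (f : S -> C) : S -> C :=
  fun x => f (mul s x).
Definition Tmu {S : Type} (mul : S -> S -> S) (mu : (S -> C) -> C) (f : S -> C) : S -> C :=
  fun s => mu (Lshift mul s f).

Definition Lmc {S : Type} (mul : S -> S -> S) (open : (S -> Prop) -> Prop) (f : S -> C) : Prop :=
  CB open f /\ forall mu, in_betaS open mu -> CB open (Tmu mul mu f).

Definition is_ideal {S : Type} (mul : S -> S -> S) (open : (S -> Prop) -> Prop)
  (I : (S -> C) -> Prop) : Prop :=
  (forall f, I f -> Lmc mul open f) /\
  I fzero /\
  (forall f g, I f -> I g -> I (fadd f g)) /\
  (forall h f, Lmc mul open h -> I f -> I (fmul h f)).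

Definition proper_ideal {S : Type} (mul : S -> S -> S) (open : (S -> Prop) -> Prop)
  (I : (S -> C) -> Prop) : Prop :=
  is_ideal mul open I /\ exists f, Lmc mul open f /\ ~ I f.

Definition maximal_ideal {S : Type} (mul : S -> S -> S) (open : (S -> Prop) -> Prop)
  (M : (S -> C) -> Prop) : Prop :=
  proper_ideal mul open M /\
  forall J, proper_ideal mul open J -> (forall f, M f -> J f) -> forall f, J f -> M f.

Definition zero_set {S : Type} (f : S -> C) : S -> Prop := fun x => f x = C0.

Definition ZLmc {S : Type} (mul : S -> S -> S) (open : (S -> Prop) -> Prop)
  (Z : S -> Prop) : Prop :=
  exists f, Lmc mul open f /\ Z = zero_set f.

Definition Eeps {S : Type} (eps : R) (f : S -> C) : S -> Prop :=
  fun x => Cabs (f x) <= eps.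

Definition Efam {S : Type} (I : (S -> C) -> Prop) : (S -> Prop) -> Prop :=
  fun Z => exists f eps, I f /\ 0 < eps /\ Z = Eeps eps f.

Definition Eminus {S : Type} (mul : S -> S -> S) (open : (S -> Prop) -> Prop)
  (A : (S -> Prop) -> Prop) : (S -> C) -> Prop :=
  fun f => Lmc mul open f /\ forall eps, 0 < eps -> A (Eeps eps f).

Definition z_filter {S : Type} (mul : S -> S -> S) (open : (S -> Prop) -> Prop)
  (A : (S -> Prop) -> Prop) : Prop :=
  (forall Z, A Z -> ZLmc mul open Z) /\
  ~ A (fun _ => False) /\
  A (fun _ => True) /\
  (forall Z1 Z2, A Z1 -> A Z2 -> A (fun x => Z1 x /\ Z2 x)) /\
  (forall Z1 Z2, A Z1 -> ZLmc mul open Z2 -> (forall x, Z1 x -> Z2 x) -> A Z2).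

Definition e_filter {S : Type} (mul : S -> S -> S) (open : (S -> Prop) -> Prop)
  (A : (S -> Prop) -> Prop) : Prop :=
  z_filter mul open A /\
  forall Z, Efam (Eminus mul open A) Z <-> A Z.

Definition e_ultrafilter {S : Type} (mul : S -> S -> S) (open : (S -> Prop) -> Prop)
  (A : (S -> Prop) -> Prop) : Prop :=
  e_filter mul open A /\
  forall B, e_filter mul open B -> (forall Z, A Z -> B Z) -> forall Z, B Z -> A Z.

(* Main.v *)
Require Import Defs.
From Stdlib Require Import Reals Lra Psatz Classical FunctionalExtensionality PropExtensionality.
Import Defs.
Open Scope R_scope.


Lemma Cext z w : Re z = Re w -> Im z = Im w -> z = w.
Proof. destruct z, w; simpl; intros; subst; reflexivity. Qed.

Lemma Cabs_ge0 z : 0 <= Cabs z.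
Proof. unfold Cabs; apply sqrt_pos. Qed.

Lemma Cabs_sq z : Cabs z * Cabs z = Re z * Re z + Im z * Im z.
Proof. unfold Cabs; apply sqrt_sqrt; nra. Qed.

Lemma sq_le a b : 0 <= b -> a*a <= b*b -> a <= b.
Proof. intros; nra. Qed.

Lemma Rabs_sqr a : Rabs a * Rabs a = a * a.
Proof. rewrite <- Rabs_mult. apply Rabs_pos_eq. nra. Qed.

Lemma Re_le z : Rabs (Re z) <= Cabs z.
Proof. apply sq_le. apply Cabs_ge0. rewrite Cabs_sq, Rabs_sqr. nra. Qed.

Lemma Im_le z : Rabs (Im z) <= Cabs z.
Proof. apply sq_le. apply Cabs_ge0. rewrite Cabs_sq, Rabs_sqr. nra. Qed.

Lemma Cabs_le_sum z : Cabs z <= Rabs (Re z) + Rabs (Im z).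
Proof.
  apply sq_le. pose proof (Rabs_pos (Re z)); pose proof (Rabs_pos (Im z)); lra.
  rewrite Cabs_sq. pose proof (Rabs_sqr (Re z)); pose proof (Rabs_sqr (Im z)).
  pose proof (Rabs_pos (Re z)); pose proof (Rabs_pos (Im z)). nra.
Qed.

Lemma CS x y u v a b : 0 <= a -> 0 <= b -> a*a = x*x+u*u -> b*b = y*y+v*v ->
  x*y+u*v <= a*b.
Proof.
  intros Ha Hb Ha2 Hb2.
  destruct (Rle_dec (x*y+u*v) 0). pose proof (Rmult_le_pos a b Ha Hb); lra.
  apply sq_le. nra.
  replace (a*b*(a*b)) with ((a*a)*(b*b)) by ring. rewrite Ha2, Hb2.
  pose proof (Rle_0_sqr (x*v-u*y)); unfold Rsqr in *.
  assert ((x*x+u*u)*(y*y+v*v) = (x*y+u*v)*(x*y+u*v) + (x*v-u*y)*(x*v-u*y)) by ring. lra.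
Qed.

Lemma Cabs_tri z w : Cabs (Cadd z w) <= Cabs z + Cabs w.
Proof.
  apply sq_le. pose proof (Cabs_ge0 z); pose proof (Cabs_ge0 w); lra.
  rewrite Cabs_sq. simpl.
  pose proof (CS (Re z) (Re w) (Im z) (Im w) (Cabs z) (Cabs w) (Cabs_ge0 z) (Cabs_ge0 w) (Cabs_sq z) (Cabs_sq w)).
  pose proof (Cabs_sq z); pose proof (Cabs_sq w). nra.
Qed.

Lemma Cabs_mul z w : Cabs (Cmul z w) = Cabs z * Cabs w.
Proof.
  unfold Cabs. rewrite <- sqrt_mult_alt by nra. f_equal. simpl. ring.
Qed.

Lemma Cabs_real a : Cabs (mkC a 0) = Rabs a.
Proof.
  unfold Cabs; simpl. replace (a*a+0*0) with (Rsqr a) by (unfold Rsqr; ring).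
  apply sqrt_Rsqr_abs.
Qed.

Lemma Cabs_C0 : Cabs C0 = 0.
Proof. unfold C0. rewrite Cabs_real. apply Rabs_R0. Qed.

Lemma Cabs_C1 : Cabs C1 = 1.
Proof. unfold C1. rewrite Cabs_real. apply Rabs_R1. Qed.

Lemma Cabs_eq0 z : Cabs z = 0 -> z = C0.
Proof.
  intro H. pose proof (Cabs_sq z). rewrite H in H0.
  apply Cext; simpl; nra.
Qed.

Lemma Cabs_pos z : z <> C0 -> 0 < Cabs z.
Proof.
  intro H. destruct (Cabs_ge0 z); auto. exfalso; apply H, Cabs_eq0; auto.
Qed.

Lemma Cdist_sym a b : Cabs (Cadd a (Copp b)) = Cabs (Cadd b (Copp a)).
Proof. unfold Cabs; simpl; f_equal; ring. Qed.

Lemma Cdist_tri a b c :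
  Cabs (Cadd a (Copp c)) <= Cabs (Cadd a (Copp b)) + Cabs (Cadd b (Copp c)).
Proof.
  replace (Cadd a (Copp c)) with (Cadd (Cadd a (Copp b)) (Cadd b (Copp c)))
    by (apply Cext; simpl; ring).
  apply Cabs_tri.
Qed.

Lemma Cabs_rev a b : Rabs (Cabs a - Cabs b) <= Cabs (Cadd a (Copp b)).
Proof.
  assert (H1 : Cabs a <= Cabs (Cadd a (Copp b)) + Cabs b).
  { replace a with (Cadd (Cadd a (Copp b)) b) at 1 by (apply Cext; simpl; ring). apply Cabs_tri. }
  assert (H2 : Cabs b <= Cabs (Cadd b (Copp a)) + Cabs a).
  { replace b with (Cadd (Cadd b (Copp a)) a) at 1 by (apply Cext; simpl; ring). apply Cabs_tri. }
  rewrite Cdist_sym in H2. apply Rabs_le; lra.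
Qed.

Definition rcont (r : C -> C -> R) : Prop :=
  forall z w eps, 0 < eps -> exists d, 0 < d /\ forall z' w',
    Cabs (Cadd z' (Copp z)) < d -> Cabs (Cadd w' (Copp w)) < d ->
    Rabs (r z' w' - r z w) < eps.

Definition rbnd (r : C -> C -> R) : Prop :=
  forall K, exists K', forall z w, Cabs z <= K -> Cabs w <= K -> Rabs (r z w) <= K'.

Lemma rcont_lip r : (forall z w z' w', Rabs (r z' w' - r z w) <=
   Cabs (Cadd z' (Copp z)) + Cabs (Cadd w' (Copp w))) -> rcont r.
Proof.
  intros H z w eps He. exists (eps/2). split. lra. intros z' w' H1 H2.
  specialize (H z w z' w'). lra.
Qed.

Lemma rcont_const c : rcont (fun _ _ => c).
Proof. apply rcont_lip; intros. unfold Rminus; rewrite Rplus_opp_r, Rabs_R0.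
  pose proof (Cabs_ge0 (Cadd z' (Copp z))); pose proof (Cabs_ge0 (Cadd w' (Copp w))); lra. Qed.

Lemma rcont_Rez : rcont (fun z w => Re z).
Proof. apply rcont_lip; intros. pose proof (Re_le (Cadd z' (Copp z))). simpl in H.
  pose proof (Cabs_ge0 (Cadd w' (Copp w))); unfold Rminus; lra. Qed.
Lemma rcont_Imz : rcont (fun z w => Im z).
Proof. apply rcont_lip; intros. pose proof (Im_le (Cadd z' (Copp z))). simpl in H.
  pose proof (Cabs_ge0 (Cadd w' (Copp w))); unfold Rminus; lra. Qed.
Lemma rcont_Rew : rcont (fun z w => Re w).
Proof. apply rcont_lip; intros. pose proof (Re_le (Cadd w' (Copp w))). simpl in H.
  pose proof (Cabs_ge0 (Cadd z' (Copp z))); unfold Rminus; lra. Qed.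
Lemma rcont_Imw : rcont (fun z w => Im w).
Proof. apply rcont_lip; intros. pose proof (Im_le (Cadd w' (Copp w))). simpl in H.
  pose proof (Cabs_ge0 (Cadd z' (Copp z))); unfold Rminus; lra. Qed.
Lemma rcont_absz : rcont (fun z w => Cabs z).
Proof. apply rcont_lip; intros. pose proof (Cabs_rev z' z).
  pose proof (Cabs_ge0 (Cadd w' (Copp w))); lra. Qed.
Lemma rcont_absw : rcont (fun z w => Cabs w).
Proof. apply rcont_lip; intros. pose proof (Cabs_rev w' w).
  pose proof (Cabs_ge0 (Cadd z' (Copp z))); lra. Qed.

Lemma rcont_plus r1 r2 : rcont r1 -> rcont r2 -> rcont (fun z w => r1 z w + r2 z w).
Proof.
  intros H1 H2 z w eps He.
  destruct (H1 z w (eps/2)) as [d1 [Hd1 P1]]; [lra|].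
  destruct (H2 z w (eps/2)) as [d2 [Hd2 P2]]; [lra|].
  exists (Rmin d1 d2); split. apply Rmin_pos; auto. intros z' w' A B.
  pose proof (Rmin_l d1 d2); pose proof (Rmin_r d1 d2).
  specialize (P1 z' w' ltac:(lra) ltac:(lra)). specialize (P2 z' w' ltac:(lra) ltac:(lra)).
  replace (r1 z' w' + r2 z' w' - (r1 z w + r2 z w)) with ((r1 z' w' - r1 z w) + (r2 z' w' - r2 z w)) by ring.
  pose proof (Rabs_triang (r1 z' w' - r1 z w) (r2 z' w' - r2 z w)). lra.
Qed.

Lemma rcont_comp1 (phi : R -> R) L r : 0 < L ->
  (forall a b, Rabs (phi a - phi b) <= L * Rabs (a - b)) -> rcont r ->
  rcont (fun z w => phi (r z w)).
Proof.
  intros HL Hp H z w eps He.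
  destruct (H z w (eps/L)) as [d [Hd P]]. apply Rdiv_lt_0_compat; auto.
  exists d; split; auto. intros z' w' A B. specialize (P z' w' A B).
  specialize (Hp (r z' w') (r z w)).
  apply Rmult_lt_compat_l with (r := L) in P; auto.
  replace (L * (eps/L)) with eps in P by (field; lra). lra.
Qed.

Lemma rcont_opp r : rcont r -> rcont (fun z w => - r z w).
Proof.
  intro H. apply (rcont_comp1 Ropp 1); auto. lra.
  intros. replace (-a - -b) with (-(a-b)) by ring. rewrite Rabs_Ropp. lra.
Qed.

Lemma rcont_minus r1 r2 : rcont r1 -> rcont r2 -> rcont (fun z w => r1 z w - r2 z w).
Proof. intros. unfold Rminus. apply rcont_plus; auto. apply rcont_opp; auto. Qed.

Lemma Rmax_lip c a b : Rabs (Rmax a c - Rmax b c) <= 1 * Rabs (a - b).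
Proof. unfold Rmax; repeat destruct Rle_dec; unfold Rabs; repeat destruct Rcase_abs; lra. Qed.
Lemma Rmin_lip c a b : Rabs (Rmin a c - Rmin b c) <= 1 * Rabs (a - b).
Proof. unfold Rmin; repeat destruct Rle_dec; unfold Rabs; repeat destruct Rcase_abs; lra. Qed.

Lemma rcont_max r c : rcont r -> rcont (fun z w => Rmax (r z w) c).
Proof. intro H. apply (rcont_comp1 (fun a => Rmax a c) 1); auto. lra. apply Rmax_lip. Qed.
Lemma rcont_min r c : rcont r -> rcont (fun z w => Rmin (r z w) c).
Proof. intro H. apply (rcont_comp1 (fun a => Rmin a c) 1); auto. lra. apply Rmin_lip. Qed.

Lemma Rmax_ge_r a c : c <= Rmax a c.
Proof. apply Rmax_r. Qed.

Lemma invmax_lip c a b : 0 < c ->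
  Rabs (/ Rmax a c - / Rmax b c) <= (/ (c*c)) * Rabs (a - b).
Proof.
  intro Hc. set (x := Rmax a c). set (y := Rmax b c).
  assert (Hx : c <= x) by apply Rmax_r. assert (Hy : c <= y) by apply Rmax_r.
  replace (/x - /y) with ((y - x) * /(x*y)) by (field; lra).
  rewrite Rabs_mult. rewrite (Rabs_pos_eq (/(x*y))).
  2:{ left. apply Rinv_0_lt_compat. nra. }
  rewrite Rmult_comm. apply Rmult_le_compat.
  left; apply Rinv_0_lt_compat; nra. apply Rabs_pos.
  apply Rinv_le_contravar; nra.
  pose proof (Rmax_lip c a b). unfold x, y. rewrite <- Rabs_Ropp.
  replace (- (Rmax b c - Rmax a c)) with (Rmax a c - Rmax b c) by ring. lra.
Qed.

Lemma rcont_invmax r c : 0 < c -> rcont r -> rcont (fun z w => / Rmax (r z w) c).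
Proof. intros Hc H. apply (rcont_comp1 (fun a => / Rmax a c) (/(c*c))); auto.
  apply Rinv_0_lt_compat; nra. intros; apply invmax_lip; auto. Qed.

Lemma rcont_mult r1 r2 : rcont r1 -> rcont r2 -> rcont (fun z w => r1 z w * r2 z w).
Proof.
  intros H1 H2 z w eps He.
  set (a := r1 z w). set (b := r2 z w).
  pose proof (Rabs_pos a) as Pa. pose proof (Rabs_pos b) as Pb.
  set (e1 := Rmin 1 (eps / (2 * (Rabs b + 1)))).
  set (e2 := eps / (2 * (Rabs a + 1))).
  assert (He1 : 0 < e1). { apply Rmin_pos. lra. apply Rdiv_lt_0_compat; lra. }
  assert (He2 : 0 < e2). { apply Rdiv_lt_0_compat; lra. }
  destruct (H1 z w e1 He1) as [d1 [Hd1 P1]].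
  destruct (H2 z w e2 He2) as [d2 [Hd2 P2]].
  exists (Rmin d1 d2); split. apply Rmin_pos; auto. intros z' w' A B.
  pose proof (Rmin_l d1 d2); pose proof (Rmin_r d1 d2).
  specialize (P1 z' w' ltac:(lra) ltac:(lra)). specialize (P2 z' w' ltac:(lra) ltac:(lra)).
  fold a b in P1, P2 |- *.
  set (p := r1 z' w' - a) in *. set (q := r2 z' w' - b) in *.
  replace (r1 z' w' * r2 z' w' - a * b) with (a * q + p * b + p * q) by (unfold p, q; ring).
  assert (T : Rabs (a*q + p*b + p*q) <= Rabs a * Rabs q + Rabs p * Rabs b + Rabs p * Rabs q).
  { pose proof (Rabs_triang (a*q+p*b) (p*q)). pose proof (Rabs_triang (a*q) (p*b)).
    rewrite !Rabs_mult in *. lra. }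
  assert (E1a : e1 <= 1) by apply Rmin_l.
  assert (E1b : e1 <= eps / (2 * (Rabs b + 1))) by apply Rmin_r.
  assert (E1c : e1 * (2 * (Rabs b + 1)) <= eps).
  { apply Rmult_le_compat_r with (r := 2 * (Rabs b + 1)) in E1b; [|lra].
    replace (eps / (2 * (Rabs b + 1)) * (2 * (Rabs b + 1))) with eps in E1b by (field; lra). lra. }
  assert (E2 : e2 * (2 * (Rabs a + 1)) = eps) by (unfold e2; field; lra).
  pose proof (Rabs_pos p); pose proof (Rabs_pos q).
  assert (X1 : (Rabs a + Rabs p) * Rabs q < (Rabs a + 1) * e2).
  { apply Rle_lt_trans with ((Rabs a + 1) * Rabs q). apply Rmult_le_compat_r; lra.
    apply Rmult_lt_compat_l; lra. }
  assert (X2 : Rabs p * Rabs b <= e1 * (Rabs b + 1)).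
  { apply Rmult_le_compat; lra. }
  lra.
Qed.

Lemma rbnd_const c : rbnd (fun _ _ => c).
Proof. intro K. exists (Rabs c). intros; lra. Qed.
Lemma rbnd_Rez : rbnd (fun z w => Re z).
Proof. intro K. exists K. intros. pose proof (Re_le z). lra. Qed.
Lemma rbnd_Imz : rbnd (fun z w => Im z).
Proof. intro K. exists K. intros. pose proof (Im_le z). lra. Qed.
Lemma rbnd_Rew : rbnd (fun z w => Re w).
Proof. intro K. exists K. intros. pose proof (Re_le w). lra. Qed.
Lemma rbnd_Imw : rbnd (fun z w => Im w).
Proof. intro K. exists K. intros. pose proof (Im_le w). lra. Qed.
Lemma rbnd_absz : rbnd (fun z w => Cabs z).
Proof. intro K. exists K. intros. rewrite Rabs_pos_eq; auto. apply Cabs_ge0. Qed.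
Lemma rbnd_absw : rbnd (fun z w => Cabs w).
Proof. intro K. exists K. intros. rewrite Rabs_pos_eq; auto. apply Cabs_ge0. Qed.

Lemma rbnd_plus r1 r2 : rbnd r1 -> rbnd r2 -> rbnd (fun z w => r1 z w + r2 z w).
Proof. intros H1 H2 K. destruct (H1 K) as [A HA]; destruct (H2 K) as [B HB].
  exists (A+B). intros. specialize (HA z w H H0); specialize (HB z w H H0).
  pose proof (Rabs_triang (r1 z w) (r2 z w)). lra. Qed.
Lemma rbnd_mult r1 r2 : rbnd r1 -> rbnd r2 -> rbnd (fun z w => r1 z w * r2 z w).
Proof. intros H1 H2 K. destruct (H1 K) as [A HA]; destruct (H2 K) as [B HB].
  exists (A*B). intros. specialize (HA z w H H0); specialize (HB z w H H0).
  rewrite Rabs_mult. apply Rmult_le_compat; auto using Rabs_pos. Qed.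
Lemma rbnd_comp1 (phi : R -> R) A B r : 0 <= B ->
  (forall a, Rabs (phi a) <= A + B * Rabs a) -> rbnd r -> rbnd (fun z w => phi (r z w)).
Proof. intros HB Hp H K. destruct (H K) as [K' HK]. exists (A + B * K'). intros.
  specialize (HK z w H0 H1). specialize (Hp (r z w)).
  apply Rle_trans with (1 := Hp). apply Rplus_le_compat_l. apply Rmult_le_compat_l; auto. Qed.
Lemma rbnd_opp r : rbnd r -> rbnd (fun z w => - r z w).
Proof. apply (rbnd_comp1 Ropp 0 1). lra. intros; rewrite Rabs_Ropp; lra. Qed.
Lemma rbnd_minus r1 r2 : rbnd r1 -> rbnd r2 -> rbnd (fun z w => r1 z w - r2 z w).
Proof. intros. unfold Rminus. apply rbnd_plus; auto. apply rbnd_opp; auto. Qed.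
Lemma rbnd_max r c : rbnd r -> rbnd (fun z w => Rmax (r z w) c).
Proof. apply (rbnd_comp1 (fun a => Rmax a c) (Rabs c) 1). lra.
  intros. unfold Rmax; destruct Rle_dec; unfold Rabs; repeat destruct Rcase_abs; lra. Qed.
Lemma rbnd_min r c : rbnd r -> rbnd (fun z w => Rmin (r z w) c).
Proof. apply (rbnd_comp1 (fun a => Rmin a c) (Rabs c) 1). lra.
  intros. unfold Rmin; destruct Rle_dec; unfold Rabs; repeat destruct Rcase_abs; lra. Qed.
Lemma rbnd_invmax r c : 0 < c -> rbnd r -> rbnd (fun z w => / Rmax (r z w) c).
Proof. intro Hc. apply (rbnd_comp1 (fun a => / Rmax a c) (/c) 0). lra.
  intros. assert (c <= Rmax a c) by apply Rmax_r.
  rewrite Rabs_pos_eq. rewrite Rmult_0_l, Rplus_0_r. apply Rinv_le_contravar; lra.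
  left; apply Rinv_0_lt_compat; lra. Qed.

Definition goodh (h : C -> C -> C) : Prop :=
  rcont (fun z w => Re (h z w)) /\ rcont (fun z w => Im (h z w)) /\
  rbnd (fun z w => Re (h z w)) /\ rbnd (fun z w => Im (h z w)).

Ltac rc := repeat first [ apply rcont_plus | apply rcont_minus | apply rcont_mult
  | apply rcont_opp | apply rcont_max | apply rcont_min
  | (apply rcont_invmax; [assumption|]) | apply rcont_Rez | apply rcont_Imz
  | apply rcont_Rew | apply rcont_Imw | apply rcont_absz | apply rcont_absw
  | apply rcont_const
  | apply rbnd_plus | apply rbnd_minus | apply rbnd_mult
  | apply rbnd_opp | apply rbnd_max | apply rbnd_min
  | (apply rbnd_invmax; [assumption|]) | apply rbnd_Rez | apply rbnd_Imz
  | apply rbnd_Rew | apply rbnd_Imw | apply rbnd_absz | apply rbnd_absw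
  | apply rbnd_const ].
Ltac goodtac := unfold goodh; simpl; repeat split; rc.

Lemma good_add : goodh Cadd. Proof. goodtac. Qed.
Lemma good_mul : goodh Cmul. Proof. goodtac. Qed.
Lemma good_test c : 0 < c -> goodh (fun z w => mkC (/ Rmax (Re z) c) 0). Proof. intro. goodtac. Qed.
Lemma good_test2 d : goodh (fun z w => mkC (Rmin (Cabs z) d + Cabs w) 0). Proof. goodtac. Qed.

Lemma CB_comp {S} (mul : S -> S -> S) open (HS : semitop_semigroup mul open) h f g :
  goodh h -> CB open f -> CB open g -> CB open (fun x => h (f x) (g x)).
Proof.
  intros [Hr [Hi [Br Bi]]] [Cf [Kf HKf]] [Cg [Kg HKg]].
  destruct HS as [[Htop [Hint _]] _]. split.
  - intros x eps He.
    destruct (Hr (f x) (g x) (eps/2)) as [d1 [Hd1 P1]]; [lra|].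
    destruct (Hi (f x) (g x) (eps/2)) as [d2 [Hd2 P2]]; [lra|].
    set (d := Rmin d1 d2). assert (Hd : 0 < d) by (apply Rmin_pos; auto).
    assert (d <= d1) by apply Rmin_l. assert (d <= d2) by apply Rmin_r.
    destruct (Cf x d Hd) as [U [HU [Ux PU]]].
    destruct (Cg x d Hd) as [V [HV [Vx PV]]].
    exists (fun y => U y /\ V y). split. apply Hint; auto. split. auto.
    intros y [Uy Vy]. specialize (PU y Uy). specialize (PV y Vy).
    specialize (P1 (f y) (g y) ltac:(lra) ltac:(lra)).
    specialize (P2 (f y) (g y) ltac:(lra) ltac:(lra)).
    eapply Rle_lt_trans. apply Cabs_le_sum. simpl. unfold Rminus in P1, P2. lra.
  - destruct (Br (Rmax Kf Kg)) as [A HA]. destruct (Bi (Rmax Kf Kg)) as [B HB].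
    exists (A + B). intro x.
    assert (Cabs (f x) <= Rmax Kf Kg) by (eapply Rle_trans; [apply HKf| apply Rmax_l]).
    assert (Cabs (g x) <= Rmax Kf Kg) by (eapply Rle_trans; [apply HKg| apply Rmax_r]).
    specialize (HA _ _ H H0). specialize (HB _ _ H H0).
    eapply Rle_trans. apply Cabs_le_sum. lra.
Qed.

Lemma CB_const {S} (mul : S -> S -> S) open (HS : semitop_semigroup mul open) c :
  CB open (fun _ : S => c).
Proof.
  destruct HS as [[Htop _] _]. split.
  - intros x eps He. exists (fun _ => True). split; auto. split; auto. intros.
    replace (Cadd c (Copp c)) with C0 by (apply Cext; simpl; ring). rewrite Cabs_C0; lra.
  - exists (Cabs c). intros; lra.
Qed.

Lemma CB_shift {S} (mul : S -> S -> S) open (HS : semitop_semigroup mul open) s f :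
  CB open f -> CB open (Lshift mul s f).
Proof.
  intros [Cf [K HK]]. destruct HS as [_ [_ [_ [Hl _]]]]. split.
  - intros x eps He. destruct (Cf (mul s x) eps He) as [U [HU [Ux PU]]].
    exists (fun y => U (mul s y)). split. apply (Hl s U HU). split; auto.
    intros y Uy. apply PU; auto.
  - exists K. intro x. apply HK.
Qed.

Lemma Cmul_cancel x y : y <> C0 -> Cmul x y = y -> x = C1.
Proof.
  intros Hy E. pose proof (Cabs_pos y Hy) as P. pose proof (Cabs_sq y) as Q.
  assert (N : 0 < Re y * Re y + Im y * Im y) by nra.
  assert (E1 : Re (Cmul x y) = Re y) by (rewrite E; auto).
  assert (E2 : Im (Cmul x y) = Im y) by (rewrite E; auto). simpl in E1, E2.
  assert (A : (Re x - 1) * (Re y * Re y + Im y * Im y) = 0).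
  { replace ((Re x - 1) * (Re y * Re y + Im y * Im y)) with
     (Re y * (Re x * Re y - Im x * Im y - Re y) + Im y * (Re x * Im y + Im x * Re y - Im y)) by ring.
    rewrite E1, E2. ring. }
  assert (B : Im x * (Re y * Re y + Im y * Im y) = 0).
  { replace (Im x * (Re y * Re y + Im y * Im y)) with
     (- Im y * (Re x * Re y - Im x * Im y - Re y) + Re y * (Re x * Im y + Im x * Re y - Im y)) by ring.
    rewrite E1, E2. ring. }
  apply Rmult_integral in A; apply Rmult_integral in B.
  apply Cext; simpl; lra.
Qed.

Lemma mu_one {S} (mul : S -> S -> S) open (HS : semitop_semigroup mul open) mu :
  in_betaS open mu -> mu (fun _ => C1) = C1.
Proof.
  intros [Ha [Hs [Hm [f0 [Hf0 Hn]]]]].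
  pose proof (Hm (fun _ => C1) f0 (CB_const mul open HS C1) Hf0) as E.
  replace (fmul (fun _ : S => C1) f0) with f0 in E.
  2:{ apply functional_extensionality; intro x. unfold fmul. apply Cext; simpl; ring. }
  apply (Cmul_cancel _ (mu f0)); auto.
Qed.

Lemma mu_const {S} (mul : S -> S -> S) open (HS : semitop_semigroup mul open) mu c :
  in_betaS open mu -> mu (fun _ => c) = c.
Proof.
  intro Hmu. pose proof (mu_one mul open HS mu Hmu) as H1.
  destruct Hmu as [Ha [Hs _]].
  pose proof (Hs c (fun _ => C1) (CB_const mul open HS C1)) as E.
  replace (fscal c (fun _ : S => C1)) with (fun _ : S => c) in E.
  2:{ apply functional_extensionality; intro x. unfold fscal. apply Cext; simpl; ring. }
  rewrite E, H1. apply Cext; simpl; ring.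
Qed.

Lemma mu_inv {S} (mul : S -> S -> S) open (HS : semitop_semigroup mul open) mu w m :
  in_betaS open mu -> CB open w -> 0 < m ->
  (forall x, Im (w x) = 0 /\ m <= Re (w x)) -> mu w <> C0.
Proof.
  intros Hmu Hw Hm Hx E.
  set (v := fun x => mkC (/ Rmax (Re (w x)) m) 0).
  assert (Hv : CB open v).
  { apply (CB_comp mul open HS (fun z _ => mkC (/ Rmax (Re z) m) 0) w w); auto. goodtac. }
  pose proof (mu_one mul open HS mu Hmu) as H1.
  destruct Hmu as [Ha [Hs [Hmul _]]].
  specialize (Hmul w v Hw Hv).
  replace (fmul w v) with (fun _ : S => C1) in Hmul.
  2:{ apply functional_extensionality; intro x. unfold fmul, v.
      destruct (Hx x) as [Hi Hr]. rewrite Rmax_left by lra.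
      apply Cext; simpl; rewrite Hi; field; lra. }
  rewrite H1, E in Hmul. assert (Re C1 = Re (Cmul C0 (mu v))) by (rewrite Hmul; auto).
  simpl in H. lra.
Qed.

Definition cj {S} (u : S -> C) : S -> C := fun x => mkC (Re (u x)) (- Im (u x)).
Definition sqf {S} (u : S -> C) : S -> C := fmul u (cj u).

Lemma good_cj : goodh (fun z (_ : C) => mkC (Re z) (- Im z)). Proof. goodtac. Qed.
Lemma good_sub a : goodh (fun z (_ : C) => Cadd z (Copp a)). Proof. goodtac. Qed.
Lemma good_fadd : goodh Cadd. Proof. goodtac. Qed.
Lemma good_fmul : goodh Cmul. Proof. goodtac. Qed.

Lemma CB_cj {S} (mul : S -> S -> S) open (HS : semitop_semigroup mul open) u :
  CB open u -> CB open (cj u).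
Proof. intro. apply (CB_comp mul open HS _ u u good_cj); auto. Qed.
Lemma CB_add {S} (mul : S -> S -> S) open (HS : semitop_semigroup mul open) u v :
  CB open u -> CB open v -> CB open (fadd u v).
Proof. intros. apply (CB_comp mul open HS _ u v good_fadd); auto. Qed.
Lemma CB_mul {S} (mul : S -> S -> S) open (HS : semitop_semigroup mul open) u v :
  CB open u -> CB open v -> CB open (fmul u v).
Proof. intros. apply (CB_comp mul open HS _ u v good_fmul); auto. Qed.
Lemma CB_sq {S} (mul : S -> S -> S) open (HS : semitop_semigroup mul open) u :
  CB open u -> CB open (sqf u).
Proof. intros. apply (CB_mul mul open HS); auto. apply (CB_cj mul open HS); auto. Qed.

Lemma sq_Re z : Re (Cmul z (mkC (Re z) (- Im z))) = Cabs z * Cabs z.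
Proof. rewrite Cabs_sq. simpl. ring. Qed.
Lemma sq_Im z : Im (Cmul z (mkC (Re z) (- Im z))) = 0.
Proof. simpl. ring. Qed.

Lemma mu_sub {S} (mul : S -> S -> S) open (HS : semitop_semigroup mul open) mu u :
  in_betaS open mu -> CB open u -> mu (fun x => Cadd (u x) (Copp (mu u))) = C0.
Proof.
  intros Hmu Hu. pose proof (mu_const mul open HS mu (Copp (mu u)) Hmu) as Hc.
  destruct Hmu as [Ha _].
  pose proof (Ha u (fun _ => Copp (mu u)) Hu (CB_const mul open HS _)) as E.
  unfold fadd in E. rewrite E, Hc. apply Cext; simpl; ring.
Qed.

Lemma mu_sqsub {S} (mul : S -> S -> S) open (HS : semitop_semigroup mul open) mu u :
  in_betaS open mu -> CB open u -> mu (sqf (fun x => Cadd (u x) (Copp (mu u)))) = C0.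
Proof.
  intros Hmu Hu.
  assert (Hs : CB open (fun x => Cadd (u x) (Copp (mu u)))).
  { apply (CB_comp mul open HS _ u u (good_sub (mu u))); auto. }
  pose proof (mu_sub mul open HS mu u Hmu Hu) as E.
  destruct Hmu as [_ [_ [Hm _]]]. unfold sqf. rewrite Hm; auto.
  rewrite E. apply Cext; simpl; ring. apply (CB_cj mul open HS); auto.
Qed.

Lemma mu_comp {S} (mul : S -> S -> S) open (HS : semitop_semigroup mul open) mu h f g :
  in_betaS open mu -> goodh h -> CB open f -> CB open g ->
  mu (fun x => h (f x) (g x)) = h (mu f) (mu g).
Proof.
  intros Hmu Hh Hf Hg.
  set (H := fun x => h (f x) (g x)).
  assert (HH : CB open H) by (apply (CB_comp mul open HS); auto).
  set (a := mu f). set (b := mu g). set (c := mu H). set (d := h a b).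
  destruct (classic (c = d)) as [E|NE]; auto. exfalso.
  set (e := Cabs (Cadd c (Copp d))).
  assert (He : 0 < e).
  { apply Cabs_pos. intro Z. apply NE. apply Cext.
    assert (Re (Cadd c (Copp d)) = 0) by (rewrite Z; auto). simpl in H0; lra.
    assert (Im (Cadd c (Copp d)) = 0) by (rewrite Z; auto). simpl in H0; lra. }
  destruct Hh as [Hr [Hi _]].
  destruct (Hr a b (e/4)) as [d1 [Hd1 P1]]; [lra|].
  destruct (Hi a b (e/4)) as [d2 [Hd2 P2]]; [lra|].
  set (dl := Rmin d1 d2). assert (Hdl : 0 < dl) by (apply Rmin_pos; auto).
  assert (dl <= d1) by apply Rmin_l. assert (dl <= d2) by apply Rmin_r.
  set (u1 := fun x => Cadd (f x) (Copp a)).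
  set (u2 := fun x => Cadd (g x) (Copp b)).
  set (u3 := fun x => Cadd (H x) (Copp c)).
  set (W := fadd (fadd (sqf u1) (sqf u2)) (sqf u3)).
  assert (Hu1 : CB open u1) by (apply (CB_comp mul open HS _ f f (good_sub a)); auto).
  assert (Hu2 : CB open u2) by (apply (CB_comp mul open HS _ g g (good_sub b)); auto).
  assert (Hu3 : CB open u3) by (apply (CB_comp mul open HS _ H H (good_sub c)); auto).
  assert (HW : CB open W).
  { unfold W. repeat apply (CB_add mul open HS); apply (CB_sq mul open HS); auto. }
  assert (M0 : mu W = C0).
  { pose proof (mu_sqsub mul open HS mu f Hmu Hf) as E1.
    pose proof (mu_sqsub mul open HS mu g Hmu Hg) as E2.
    pose proof (mu_sqsub mul open HS mu H Hmu HH) as E3.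
    fold a b c u1 u2 u3 in E1, E2, E3.
    destruct Hmu as [Ha _]. unfold W.
    rewrite Ha. rewrite Ha. rewrite E1, E2, E3. apply Cext; simpl; ring.
    all: try (apply (CB_add mul open HS)); apply (CB_sq mul open HS); auto. }
  set (m := Rmin (dl * dl) (e * e / 4)).
  assert (Hm : 0 < m) by (apply Rmin_pos; nra).
  assert (m <= dl * dl) by apply Rmin_l. assert (m <= e * e / 4) by apply Rmin_r.
  apply (mu_inv mul open HS mu W m Hmu HW Hm); [|exact M0].
  intro x. split.
  - unfold W, fadd, sqf, fmul, cj. simpl. ring.
  - assert (RW : Re (W x) = Cabs (u1 x) * Cabs (u1 x) + Cabs (u2 x) * Cabs (u2 x) + Cabs (u3 x) * Cabs (u3 x)).
    { unfold W, fadd, sqf, fmul, cj. rewrite !Cabs_sq. simpl. ring. }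
    rewrite RW.
    pose proof (Cabs_ge0 (u1 x)); pose proof (Cabs_ge0 (u2 x)); pose proof (Cabs_ge0 (u3 x)).
    destruct (Rlt_dec (Cabs (u1 x)) dl) as [L1|L1]; [|nra].
    destruct (Rlt_dec (Cabs (u2 x)) dl) as [L2|L2]; [|nra].
    specialize (P1 (f x) (g x) ltac:(unfold u1 in L1; lra) ltac:(unfold u2 in L2; lra)).
    specialize (P2 (f x) (g x) ltac:(unfold u1 in L1; lra) ltac:(unfold u2 in L2; lra)).
    assert (Q : Cabs (Cadd (H x) (Copp d)) < e/2).
    { eapply Rle_lt_trans. apply Cabs_le_sum. simpl. unfold Rminus in P1, P2.
      unfold H, d. lra. }
    pose proof (Cdist_tri c (H x) d) as T. rewrite (Cdist_sym c (H x)) in T.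
    fold e in T. change (Cabs (u3 x)) with (Cabs (Cadd (H x) (Copp c))) in *.
    assert (e/2 < Cabs (Cadd (H x) (Copp c))) by lra. nra.
Qed.

Lemma Lmc_comp {S} (mul : S -> S -> S) open (HS : semitop_semigroup mul open) h f g :
  goodh h -> Lmc mul open f -> Lmc mul open g -> Lmc mul open (fun x => h (f x) (g x)).
Proof.
  intros Hh [Cf Tf] [Cg Tg]. split. apply (CB_comp mul open HS); auto.
  intros mu Hmu.
  replace (Tmu mul mu (fun x => h (f x) (g x))) with (fun s => h (Tmu mul mu f s) (Tmu mul mu g s)).
  - apply (CB_comp mul open HS); auto.
  - apply functional_extensionality; intro s. unfold Tmu.
    symmetry. exact (mu_comp mul open HS mu h (Lshift mul s f) (Lshift mul s g) Hmu Hh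
      (CB_shift mul open HS s f Cf) (CB_shift mul open HS s g Cg)).
Qed.

Lemma Lmc_const {S} (mul : S -> S -> S) open (HS : semitop_semigroup mul open) c :
  Lmc mul open (fun _ => c).
Proof.
  split. apply (CB_const mul open HS). intros mu Hmu.
  replace (Tmu mul mu (fun _ => c)) with (fun _ : S => c). apply (CB_const mul open HS).
  apply functional_extensionality; intro s. unfold Tmu, Lshift.
  symmetry; apply (mu_const mul open HS); auto.
Qed.

Lemma Lmc_zero {S} (mul : S -> S -> S) open (HS : semitop_semigroup mul open) :
  Lmc mul open fzero.
Proof. apply (Lmc_const mul open HS C0). Qed.
Lemma Lmc_add {S} (mul : S -> S -> S) open (HS : semitop_semigroup mul open) u v :
  Lmc mul open u -> Lmc mul open v -> Lmc mul open (fadd u v).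
Proof. intros. apply (Lmc_comp mul open HS _ u v good_fadd); auto. Qed.
Lemma Lmc_mul {S} (mul : S -> S -> S) open (HS : semitop_semigroup mul open) u v :
  Lmc mul open u -> Lmc mul open v -> Lmc mul open (fmul u v).
Proof. intros. apply (Lmc_comp mul open HS _ u v good_fmul); auto. Qed.
Lemma Lmc_cj {S} (mul : S -> S -> S) open (HS : semitop_semigroup mul open) u :
  Lmc mul open u -> Lmc mul open (cj u).
Proof. intros. apply (Lmc_comp mul open HS _ u u good_cj); auto. Qed.

Lemma Lmc_bnd {S} (mul : S -> S -> S) open h :
  Lmc mul open h -> exists K, 0 < K /\ forall x, Cabs (h x) <= K.
Proof. intros [[_ [K HK]] _]. exists (Rabs K + 1). split.
  pose proof (Rabs_pos K); lra. intro x. specialize (HK x).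
  pose proof (Rle_abs K); lra. Qed.

Lemma Cabs_nn a : 0 <= a -> Cabs (mkC a 0) = a.
Proof. intro. rewrite Cabs_real. apply Rabs_pos_eq; auto. Qed.

Definition sqJ {S} (g : S -> C) : S -> C := fmul (cj g) g.
Lemma sqJ_pt {S} (g : S -> C) x : sqJ g x = mkC (Cabs (g x) * Cabs (g x)) 0.
Proof. unfold sqJ, fmul, cj. apply Cext; simpl. rewrite Cabs_sq; ring. ring. Qed.

Lemma ideal_sqJ {S} (mul : S -> S -> S) open (HS : semitop_semigroup mul open) I g :
  is_ideal mul open I -> I g -> I (sqJ g).
Proof. intros [Hl [_ [_ Hm]]] Hg. apply Hm; auto. apply (Lmc_cj mul open HS); auto. Qed.

Lemma ideal_all {S} (mul : S -> S -> S) open (HS : semitop_semigroup mul open) I k m :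
  is_ideal mul open I -> I k -> 0 < m -> (forall x, Im (k x) = 0 /\ m <= Re (k x)) ->
  forall f, Lmc mul open f -> I f.
Proof.
  intros HI Hk Hm Hx f Hf. pose proof HI as [Hl [_ [_ Hmul]]].
  set (v := fun x => mkC (/ Rmax (Re (k x)) m) 0).
  assert (Hv : Lmc mul open v).
  { apply (Lmc_comp mul open HS (fun z _ => mkC (/ Rmax (Re z) m) 0) k k); auto. goodtac. }
  assert (E : fmul (fmul f v) k = f).
  { apply functional_extensionality; intro x. unfold fmul, v.
    destruct (Hx x) as [Hi Hr]. rewrite Rmax_left by lra.
    apply Cext; simpl; rewrite Hi; field; lra. }
  rewrite <- E. apply Hmul; auto. apply (Lmc_mul mul open HS); auto.
Qed.

Lemma proper_no_unit {S} (mul : S -> S -> S) open (HS : semitop_semigroup mul open) I k m :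
  proper_ideal mul open I -> I k -> 0 < m -> (forall x, Im (k x) = 0 /\ m <= Re (k x)) -> False.
Proof.
  intros [HI [f [Hf Hn]]] Hk Hm Hx. apply Hn. apply (ideal_all mul open HS I k m); auto.
Qed.

Lemma ZLmc_Eeps {S} (mul : S -> S -> S) open (HS : semitop_semigroup mul open) f eta :
  Lmc mul open f -> ZLmc mul open (Eeps eta f).
Proof.
  intro Hf. exists (fun x => mkC (Rmax (Cabs (f x) - eta) 0) 0). split.
  - apply (Lmc_comp mul open HS (fun z _ => mkC (Rmax (Cabs z - eta) 0) 0) f f); auto. goodtac.
  - apply functional_extensionality; intro x. apply propositional_extensionality.
    unfold Eeps, zero_set. split; intro H.
    + rewrite Rmax_right by lra. reflexivity.
    + assert (Re (mkC (Rmax (Cabs (f x) - eta) 0) 0) = Re C0) by (rewrite H; auto).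
      simpl in H0. unfold Rmax in H0. destruct Rle_dec; lra.
Qed.

Lemma ZLmc_True {S} (mul : S -> S -> S) open (HS : semitop_semigroup mul open) :
  ZLmc mul open (fun _ => True).
Proof.
  exists fzero. split. apply (Lmc_zero mul open HS).
  apply functional_extensionality; intro x. apply propositional_extensionality.
  unfold zero_set, fzero. split; auto.
Qed.

Definition BJ {S} (mul : S -> S -> S) open (J : (S -> C) -> Prop) : (S -> Prop) -> Prop :=
  fun Z => ZLmc mul open Z /\ exists g dl, J g /\ 0 < dl /\ forall x, Eeps dl g x -> Z x.

Lemma BJ_efilter {S} (mul : S -> S -> S) open (HS : semitop_semigroup mul open) J :
  proper_ideal mul open J -> e_filter mul open (BJ mul open J).
Proof.
  intro HP. pose proof HP as [HI _]. pose proof HI as [Hl [H0 [Hadd Hmul]]].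
  split; [split; [|split; [|split; [|split]]]|].
  - intros Z [H _]; auto.
  - intros [_ [g [dl [Jg [Hdl P]]]]].
    apply (proper_no_unit mul open HS J (sqJ g) (dl*dl)); auto.
    apply (ideal_sqJ mul open HS); auto. nra.
    intro x. rewrite sqJ_pt. simpl. split; auto.
    destruct (Rle_dec (Cabs (g x)) dl). exfalso; apply (P x); auto. nra.
  - split. apply (ZLmc_True mul open HS). exists fzero, 1. repeat split; auto. lra.
  - intros Z1 Z2 [[z1 [Lz1 E1]] [g1 [d1 [J1 [Hd1 P1]]]]] [[z2 [Lz2 E2]] [g2 [d2 [J2 [Hd2 P2]]]]].
    split.
    + exists (fun x => mkC (Cabs (z1 x) + Cabs (z2 x)) 0). split.
      * apply (Lmc_comp mul open HS (fun z w => mkC (Cabs z + Cabs w) 0) z1 z2); auto. goodtac.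
      * subst. apply functional_extensionality; intro x. apply propositional_extensionality.
        unfold zero_set. pose proof (Cabs_ge0 (z1 x)); pose proof (Cabs_ge0 (z2 x)).
        split.
        { intros [A B]. rewrite A, B, Cabs_C0. apply Cext; simpl; ring. }
        { intro A. assert (R1 : Re (mkC (Cabs (z1 x) + Cabs (z2 x)) 0) = Re C0) by (rewrite A; auto).
          simpl in R1. split; apply Cabs_eq0; lra. }
    + exists (fadd (sqJ g1) (sqJ g2)), (Rmin d1 d2 * Rmin d1 d2). split.
      apply Hadd; apply (ideal_sqJ mul open HS); auto.
      assert (0 < Rmin d1 d2) by (apply Rmin_pos; auto). split. nra.
      intros x Hx. unfold Eeps, fadd in Hx. rewrite !sqJ_pt in Hx.
      pose proof (Cabs_ge0 (g1 x)); pose proof (Cabs_ge0 (g2 x)).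
      replace (Cadd _ _) with (mkC (Cabs (g1 x) * Cabs (g1 x) + Cabs (g2 x) * Cabs (g2 x)) 0) in Hx
        by (apply Cext; simpl; ring).
      rewrite Cabs_nn in Hx by nra.
      pose proof (Rmin_l d1 d2); pose proof (Rmin_r d1 d2).
      split; [apply P1|apply P2]; unfold Eeps; nra.
  - intros Z1 Z2 [_ [g [dl [Jg [Hdl P]]]]] HZ2 Inc. split; auto.
    exists g, dl. repeat split; auto.
  - intro Z. split.
    + intros [f [eps [[Lf Hf] [He E]]]]. subst. apply Hf; auto.
    + intros [[z [Lz E]] [g [dl [Jg [Hdl P]]]]]. subst.
      set (k := fun x => mkC (Rmin (Cabs (g x)) dl + Cabs (z x)) 0).
      assert (Kx : forall x, Cabs (k x) = Rmin (Cabs (g x)) dl + Cabs (z x)).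
      { intro x. unfold k. apply Cabs_nn. pose proof (Cabs_ge0 (g x)); pose proof (Cabs_ge0 (z x)).
        unfold Rmin; destruct Rle_dec; lra. }
      assert (Lk : Lmc mul open k).
      { apply (Lmc_comp mul open HS (fun u w => mkC (Rmin (Cabs u) dl + Cabs w) 0) g z); auto. goodtac. }
      exists k, dl. split; [split|split]; auto.
      * intros eta Heta. split. apply (ZLmc_Eeps mul open HS); auto.
        exists g, (Rmin eta dl). split; auto. split. apply Rmin_pos; auto.
        intros x Hx. unfold Eeps in *. pose proof (Rmin_l eta dl); pose proof (Rmin_r eta dl).
        assert (Zx : z x = C0) by (apply P; lra).
        rewrite Kx, Zx, Cabs_C0. pose proof (Rmin_l (Cabs (g x)) dl). lra.
      * apply functional_extensionality; intro x. apply propositional_extensionality.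
        unfold zero_set, Eeps. rewrite Kx. split.
        { intro Zx. rewrite Zx, Cabs_C0. pose proof (Rmin_r (Cabs (g x)) dl). lra. }
        { intro A. destruct (Rle_dec (Cabs (g x)) dl). apply P; auto.
          rewrite Rmin_right in A by lra. apply Cabs_eq0. pose proof (Cabs_ge0 (z x)). lra. }
Qed.

Lemma Eminus_proper {S} (mul : S -> S -> S) open (HS : semitop_semigroup mul open) A :
  z_filter mul open A -> proper_ideal mul open (Eminus mul open A).
Proof.
  intros [HZ [Hempty [HT [Hint Hup]]]].
  split; [split; [|split; [|split]]|].
  - intros f [Hf _]; auto.
  - split. apply (Lmc_zero mul open HS). intros eps He.
    replace (Eeps eps fzero) with (fun _ : S => True); auto.
    apply functional_extensionality; intro x. apply propositional_extensionality.
    unfold Eeps, fzero. rewrite Cabs_C0. split; intros; auto; lra.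
  - intros f g [Lf Hf] [Lg Hg]. split. apply (Lmc_add mul open HS); auto.
    intros eps He.
    apply (Hup (fun x => Eeps (eps/2) f x /\ Eeps (eps/2) g x)).
    apply Hint; apply Hf || apply Hg; lra.
    apply (ZLmc_Eeps mul open HS). apply (Lmc_add mul open HS); auto.
    intros x [A1 A2]. unfold Eeps, fadd in *. pose proof (Cabs_tri (f x) (g x)). lra.
  - intros h f Lh [Lf Hf]. split. apply (Lmc_mul mul open HS); auto.
    intros eps He. destruct (Lmc_bnd mul open h Lh) as [K [HK Hb]].
    apply (Hup (Eeps (eps/K) f)). apply Hf. apply Rdiv_lt_0_compat; auto.
    apply (ZLmc_Eeps mul open HS). apply (Lmc_mul mul open HS); auto.
    intros x Hx. unfold Eeps, fmul in *. rewrite Cabs_mul.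
    specialize (Hb x). pose proof (Cabs_ge0 (f x)); pose proof (Cabs_ge0 (h x)).
    apply Rle_trans with (K * (eps/K)). apply Rmult_le_compat; auto.
    right; field; lra.
  - exists (fun _ => C1). split. apply (Lmc_const mul open HS).
    intros [_ H]. apply Hempty. specialize (H (1/2) ltac:(lra)).
    replace (fun _ : S => False) with (Eeps (1/2) (fun _ : S => C1)); auto.
    apply functional_extensionality; intro x. apply propositional_extensionality.
    unfold Eeps. rewrite Cabs_C1. split; intros; lra.
Qed.

Lemma max_closed {S} (mul : S -> S -> S) open (HS : semitop_semigroup mul open) M f :
  maximal_ideal mul open M -> Lmc mul open f ->
  (forall eps, 0 < eps -> exists g dl, M g /\ 0 < dl /\ forall x, Eeps dl g x -> Eeps eps f x) ->
  M f.
Proof.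
  intros [HMp Hmax] Lf Hf. pose proof HMp as [HMi _]. pose proof HMi as [Hl [H0 [Hadd Hmul]]].
  set (J := fun u => exists m h, M m /\ Lmc mul open h /\ u = fadd m (fmul h f)).
  apply (Hmax J).
  - split; [split; [|split; [|split]]|].
    + intros u [m [h [Mm [Lh ->]]]]. apply (Lmc_add mul open HS); auto.
      apply (Lmc_mul mul open HS); auto.
    + exists fzero, fzero. split; [|split]; [auto|apply (Lmc_zero mul open HS)|].
      apply functional_extensionality; intro x. unfold fadd, fmul, fzero.
      apply Cext; simpl; ring.
    + intros u v [m1 [h1 [M1 [L1 ->]]]] [m2 [h2 [M2 [L2 ->]]]].
      exists (fadd m1 m2), (fadd h1 h2). split; [|split]; [auto|apply (Lmc_add mul open HS); auto|].
      apply functional_extensionality; intro x. unfold fadd, fmul.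
      apply Cext; simpl; ring.
    + intros k u Lk [m [h [Mm [Lh ->]]]].
      exists (fmul k m), (fmul k h). split; [|split]; [auto|apply (Lmc_mul mul open HS); auto|].
      apply functional_extensionality; intro x. unfold fadd, fmul.
      apply Cext; simpl; ring.
    + exists (fun _ => C1). split. apply (Lmc_const mul open HS).
      intros [m [h [Mm [Lh E]]]].
      destruct (Lmc_bnd mul open h Lh) as [K [HK Hb]].
      destruct (Hf (/(2*K))) as [g [dl [Mg [Hdl P]]]]. apply Rinv_0_lt_compat; lra.
      apply (proper_no_unit mul open HS M (fadd (sqJ m) (sqJ g)) (Rmin (1/4) (dl*dl))); auto.
      apply Hadd; apply (ideal_sqJ mul open HS); auto.
      apply Rmin_pos; nra.
      intro x. unfold fadd. rewrite !sqJ_pt. simpl. split. ring.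
      pose proof (Rmin_l (1/4) (dl*dl)); pose proof (Rmin_r (1/4) (dl*dl)).
      pose proof (Cabs_ge0 (m x)); pose proof (Cabs_ge0 (g x)).
      destruct (Rle_dec (Cabs (g x)) dl) as [Lg|Lg]; [|nra].
      specialize (P x Lg). unfold Eeps in P.
      assert (Ex : C1 = Cadd (m x) (Cmul (h x) (f x))).
      { change (C1 = fadd m (fmul h f) x). rewrite <- E. reflexivity. }
      assert (T : 1 <= Cabs (m x) + Cabs (Cmul (h x) (f x))).
      { rewrite <- Cabs_C1, Ex. apply Cabs_tri. }
      rewrite Cabs_mul in T. specialize (Hb x).
      assert (HH3 : Cabs (h x) * Cabs (f x) <= K * / (2*K)).
      { apply Rmult_le_compat; auto using Cabs_ge0. }
      replace (K * / (2*K)) with (1/2) in HH3 by (field; lra).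
      assert (1/2 <= Cabs (m x)) by lra. nra.
  - intros u Mu. exists u, fzero. split; [|split]; [auto|apply (Lmc_zero mul open HS)|].
    apply functional_extensionality; intro x. unfold fadd, fmul, fzero.
    apply Cext; simpl; ring.
  - exists fzero, (fun _ => C1). split; [|split]; [auto|apply (Lmc_const mul open HS)|].
    apply functional_extensionality; intro x. unfold fadd, fmul, fzero.
    apply Cext; simpl; ring.
Qed.

Lemma Efam_BJ {S} (mul : S -> S -> S) open (HS : semitop_semigroup mul open) M :
  maximal_ideal mul open M -> Efam M = BJ mul open M.
Proof.
  intro HM. pose proof HM as [HMp _]. pose proof HMp as [[Hl _] _].
  apply functional_extensionality; intro Z. apply propositional_extensionality. split.
  - intros [f [eps [Mf [He ->]]]]. split. apply (ZLmc_Eeps mul open HS); auto.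
    exists f, eps. repeat split; auto.
  - intro HB. pose proof (BJ_efilter mul open HS M HMp) as [_ He].
    apply He in HB. destruct HB as [k [eps [[Lk Hk] [Heps ->]]]].
    exists k, eps. repeat split; auto.
    apply (max_closed mul open HS M k HM Lk).
    intros eps' He'. destruct (Hk eps' He') as [_ [g [dl [Mg [Hdl P]]]]].
    exists g, dl. auto.
Qed.

Theorem theorem2p9 (S : Type) (mul : S -> S -> S) (open : (S -> Prop) -> Prop)
  (HS : semitop_semigroup mul open) :
  (forall M, maximal_ideal mul open M -> e_ultrafilter mul open (Efam M)) /\
  (forall A, e_ultrafilter mul open A -> maximal_ideal mul open (Eminus mul open A)) /\
  (forall M1 M2, maximal_ideal mul open M1 -> maximal_ideal mul open M2 ->
     (forall Z, Efam M1 Z <-> Efam M2 Z) -> forall f, M1 f <-> M2 f) /\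
  (forall A, e_ultrafilter mul open A ->
     exists M, maximal_ideal mul open M /\ forall Z, Efam M Z <-> A Z).
Proof.
  assert (P2 : forall A, e_ultrafilter mul open A -> maximal_ideal mul open (Eminus mul open A)).
  { intros A [[HZ He] Hult]. split. apply (Eminus_proper mul open HS); auto.
    intros J HJ Inc f Jf. pose proof HJ as [[Hl _] _].
    pose proof (BJ_efilter mul open HS J HJ) as HB.
    assert (Sub : forall Z, A Z -> BJ mul open J Z).
    { intros Z AZ. apply He in AZ. destruct AZ as [g [eps [Hg [Heps ->]]]].
      pose proof Hg as [Lg _].
      split. apply (ZLmc_Eeps mul open HS); auto. exists g, eps. repeat split; auto. }
    split; auto. intros eps Heps. apply (Hult _ HB Sub).
    split. apply (ZLmc_Eeps mul open HS); auto. exists f, eps. repeat split; auto. }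
  split; [|split; [exact P2|split]].
  - intros M HM. rewrite (Efam_BJ mul open HS M HM).
    pose proof HM as [HMp Hmax]. pose proof HMp as [[Hl _] _].
    split. apply (BJ_efilter mul open HS); auto.
    intros B [HBz HBe] Inc Z BZ.
    rewrite <- (Efam_BJ mul open HS M HM) in Inc |- *.
    assert (Sub : forall f, M f -> Eminus mul open B f).
    { intros f Mf. split; auto. intros eps He. apply Inc. exists f, eps. auto. }
    pose proof (Hmax _ (Eminus_proper mul open HS B HBz) Sub) as Back.
    apply HBe in BZ. destruct BZ as [k [eps [Hk [He ->]]]].
    exists k, eps. auto.
  - intros M1 M2 H1 H2 E.
    assert (G : forall Ma Mb, maximal_ideal mul open Ma -> maximal_ideal mul open Mb ->
       (forall Z, Efam Ma Z -> Efam Mb Z) -> forall f, Ma f -> Mb f).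
    { intros Ma Mb Ha Hb EE f Mf. pose proof Ha as [[[Hl _] _] _].
      apply (max_closed mul open HS Mb f Hb); auto.
      intros eps He. destruct (EE (Eeps eps f)) as [g [dl [Mg [Hdl Eq]]]].
      exists f, eps; auto.
      exists g, dl. repeat split; auto. rewrite Eq. auto. }
    intro f; split; apply G; auto; intro Z; apply E.
  - intros A HA. exists (Eminus mul open A). split. apply P2; auto.
    destruct HA as [[_ He] _]. apply He.
Qed.
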